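(* Consider a sequence of local public good games as described in the context with number of players $n\to\infty$, and suppose Assumption 1 holds. Let $\omega>0$ be a scalar such that $w_i\le\omega$ for all players $i$ in all games of the sequence. Then for every choice of sociable Nash equilibria $(x^*,y^*,g^* )$ of these games, the size of the core satisfies $\lim_{n\to\infty}|\mathcal C(g^* )|/n=0$.
   Context: There is a finite set of players $N=\{1,\dots,n\}$. Each player $i$ chooses a public good provision $x_i\ge 0$, a private good consumption $y_i\ge 0$, and links $g_i=(g_{i1},\dots,g_{in})\in\{0,1\}^n$ with $g_{ii}=0$; $g_{ij}=1$ means $i$ links to $j$. Let $\eta_i(g)=|\{j:g_{ij}=1\}|$. Each link costs its sponsor $k>0$ (fixed along the sequence). Player $i$'s spillovers are $\bar x_{-i}=\sum_{j}g_{ij}x_j$ and her public good consumption is $\bar x_i=x_i+\bar x_{-i}$. Player $i$ maximizes $U_i(\bar x_i,y_i)$ subject to $x_i+p_iy_i+\eta_i(g)k=w_i$, where $w_i>0$, $p_i>0$, and $U_i$ is twice continuously differentiable, strictly concave and increasing in both arguments. The Engel curve $\gamma_i$ gives, for income $W$, the public good consumption $\bar x$ maximizing $U_i(\bar x,y)$ subject to $\bar x+p_iy=W$. Assumption 1: each $\gamma_i$ is continuously differentiable with $\gamma_i'\in[0,1]$. A Nash equilibrium is a profile in which each player's strategy solves her maximization problem given the others'; it is sociable if any player who is indifferent between establishing a link or not establishes it. Under Assumption 1, the network of a non-empty sociable equilibrium is a core-periphery graph: players split into a periphery $\mathcal P$ and a core $\mathcal C$ with no links among periphery players, all core players mutually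 linked in both directions, and every periphery player linking to some core player; the core $\mathcal C(g^* )$ consists of the players providing more than $k$ (it is empty if the network is empty). *)

(* Defs.v *)
From HB Require Import structures.
From mathcomp Require Import all_boot all_order all_algebra.
From mathcomp Require Import all_classical all_reals all_analysis.
Set Implicit Arguments. Unset Strict Implicit. Unset Printing Implicit Defensive.
Import Order.TTheory GRing.Theory Num.Theory.
Import numFieldNormedType.Exports.
Local Open Scope ring_scope.
Local Open Scope classical_set_scope.

Definition partial1 {R : realType} (f : R -> R -> R) (a b : R) : R :=
  derive1 (fun t => f t b) a.
Definition partial2 {R : realType} (f : R -> R -> R) (a b : R) : R :=
  derive1 (fun t => f a t) b.

Definition has_partials {R : realType} (f : R -> R -> R) (a b : R) : Prop :=
  derivable (fun t => f t b) a 1 /\ derivable (fun t => f a t) b 1.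

Definition cont2_at {R : realType} (f : R -> R -> R) (z : R * R) : Prop :=
  {for z, continuous (fun u : R * R => f u.1 u.2)}.

Definition C2_on {R : realType} (D : set (R * R)) (f : R -> R -> R) : Prop :=
  open D /\
  forall z, D z ->
    [/\ has_partials f z.1 z.2,
        has_partials (partial1 f) z.1 z.2,
        has_partials (partial2 f) z.1 z.2,
        cont2_at f z /\ cont2_at (partial1 f) z /\ cont2_at (partial2 f) z
      & [/\ cont2_at (partial1 (partial1 f)) z, cont2_at (partial2 (partial1 f)) z,
            cont2_at (partial1 (partial2 f)) z & cont2_at (partial2 (partial2 f)) z]].

Definition quadrant {R : realType} : set (R * R) := [set z | 0 <= z.1 /\ 0 <= z.2].
Definition open_quadrant {R : realType} : set (R * R) := [set z | 0 < z.1 /\ 0 < z.2].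

Definition strictly_concave_quadrant {R : realType} (U : R -> R -> R) : Prop :=
  forall a1 b1 a2 b2 t : R,
    0 <= a1 -> 0 <= b1 -> 0 <= a2 -> 0 <= b2 -> (a1, b1) <> (a2, b2) ->
    0 < t -> t < 1 ->
    t * U a1 b1 + (1 - t) * U a2 b2 < U (t * a1 + (1 - t) * a2) (t * b1 + (1 - t) * b2).

Definition increasing_both {R : realType} (U : R -> R -> R) : Prop :=
  (forall a a' b, 0 <= a -> a < a' -> 0 <= b -> U a b < U a' b) /\
  (forall a b b', 0 <= a -> 0 <= b -> b < b' -> U a b < U a b').

Definition admissible_utility {R : realType} (U : R -> R -> R) : Prop :=
  [/\ C2_on open_quadrant U, strictly_concave_quadrant U & increasing_both U].

(* gamma is the Engel curve of U at price p: for every income W >= 0,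
   gamma W is the public good consumption xb maximizing U xb y
   subject to xb + p y = W, xb >= 0, y >= 0. *)
Definition engel_curve {R : realType} (U : R -> R -> R) (p : R) (gamma : R -> R) : Prop :=
  forall W, 0 <= W ->
    0 <= gamma W /\ gamma W <= W /\
    forall xb, 0 <= xb -> xb <= W -> U xb ((W - xb) / p) <= U (gamma W) ((W - gamma W) / p).

Definition assumption1 {R : realType} (U : R -> R -> R) (p : R) : Prop :=
  exists gamma : R -> R, engel_curve U p gamma /\
    forall W : R, 0 < W ->
      [/\ derivable gamma W 1, {for W, continuous (derive1 gamma)},
          0 <= derive1 gamma W & derive1 gamma W <= 1].

(* eta_i(g): number of links sponsored, for the row gi = g i *)
Definition eta {n : nat} (gi : 'I_n -> bool) : nat := #|finset (fun j => gi j)|.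

Definition spill {R : realType} {n : nat} (gi : 'I_n -> bool) (x : 'I_n -> R) : R :=
  \sum_(j < n) (if gi j then x j else 0).

Definition feasible {R : realType} {n : nat} (k : R) (p w : 'I_n -> R) (i : 'I_n)
    (xi yi : R) (gi : 'I_n -> bool) : Prop :=
  [/\ 0 <= xi, 0 <= yi, gi i = false & xi + p i * yi + (eta gi)%:R * k = w i].

Definition payoff {R : realType} {n : nat} (U : 'I_n -> R -> R -> R) (x : 'I_n -> R)
    (i : 'I_n) (xi yi : R) (gi : 'I_n -> bool) : R :=
  U i (xi + spill gi x) yi.

Definition nash_eq {R : realType} {n : nat} (k : R) (p w : 'I_n -> R)
    (U : 'I_n -> R -> R -> R) (x y : 'I_n -> R) (g : 'I_n -> 'I_n -> bool) : Prop :=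
  forall i : 'I_n,
    feasible k p w i (x i) (y i) (g i) /\
    forall xi yi gi, feasible k p w i xi yi gi ->
      payoff U x i xi yi gi <= payoff U x i (x i) (y i) (g i).

(* Sociable Nash equilibrium: if player i does not link to j, then
   establishing the link ij (keeping her other links) yields strictly
   less than her equilibrium payoff, whatever (xi, yi) she then chooses;
   i.e. no player is indifferent between establishing a link or not
   without establishing it. *)
Definition sociable_nash_eq {R : realType} {n : nat} (k : R) (p w : 'I_n -> R)
    (U : 'I_n -> R -> R -> R) (x y : 'I_n -> R) (g : 'I_n -> 'I_n -> bool) : Prop :=
  nash_eq k p w U x y g /\
  forall i j : 'I_n, j != i -> g i j = false ->
    forall xi yi, feasible k p w i xi yi (fun l => (l == j) || g i l) ->
      payoff U x i xi yi (fun l => (l == j) || g i l) < payoff U x i (x i) (y i) (g i).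

Definition core {R : realType} {n : nat} (k : R) (x : 'I_n -> R)
    (g : 'I_n -> 'I_n -> bool) : {set 'I_n} :=
  if [exists i, exists j, g i j] then finset (fun i => k < x i) else finset.set0.

(* Main.v *)
Require Import Defs.
From HB Require Import structures.
From mathcomp Require Import all_boot all_order all_algebra.
From mathcomp Require Import all_classical all_reals all_analysis.
From mathcomp Require Import lra.
Import Order.TTheory GRing.Theory Num.Theory.
Import numFieldNormedType.Exports.
Local Open Scope ring_scope.
Local Open Scope classical_set_scope.

Lemma spill_ge0 (R : realType) n (gi : 'I_n -> bool) (x : 'I_n -> R) :
  (forall j, 0 <= x j) -> 0 <= spill gi x.
Proof.
move=> hx; rewrite /spill; apply: sumr_ge0 => j _; by case: (gi j).
Qed.

Lemma spill_add (R : realType) n (gi : 'I_n -> bool) (x : 'I_n -> R) j :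
  gi j = false -> spill (fun l => (l == j) || gi l) x = x j + spill gi x.
Proof.
move=> hj; rewrite /spill.
rewrite (eq_bigr (fun l => (if l == j then x l else 0) + (if gi l then x l else 0))).
  by rewrite big_split /= -big_mkcond big_pred1_eq.
move=> l _; case: eqP => [->|_] /=; first by rewrite hj addr0.
by rewrite add0r.
Qed.

Lemma eta_add n (gi : 'I_n -> bool) j :
  gi j = false -> Defs.eta (fun l => (l == j) || gi l) = (Defs.eta gi).+1.
Proof.
move=> hj; rewrite /Defs.eta.
have -> : finset (fun l => (l == j) || gi l) = j |: finset (fun l => gi l).
  by apply/setP => l; rewrite !inE.
by rewrite cardsU1 inE hj.
Qed.

Lemma core_bound (R : realType) n (k : R) (p w : 'I_n -> R) (U : 'I_n -> R -> R -> R)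
  (x y : 'I_n -> R) (g : 'I_n -> 'I_n -> bool) (omega : R) :
  0 < k -> 0 <= omega -> (forall i, 0 < p i) -> (forall i, w i <= omega) ->
  (forall i, increasing_both (U i)) -> nash_eq k p w U x y g ->
  #|core k x g|%:R * k <= omega.
Proof.
move=> k0 o0 p0 wo inc ne.
have x0 : forall j, 0 <= x j by move=> j; have [[]] := ne j.
rewrite /core; case: ifP => _; last by rewrite cards0 mul0r.
case: (set_0Vmem (finset (fun i => k < x i))) => [->|[i0]].
  by rewrite cards0 mul0r.
rewrite inE => hi0.
have [[hx hy hg hb] hopt] := ne i0.
have sub : finset (fun i => k < x i) \subset i0 |: finset (fun l => g i0 l).
  apply/fintype.subsetP => j; rewrite !inE => hj.
  case: eqP => //= hji.
  apply/negPn/negP => /negbTE hg0.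
  pose gi := fun l => (l == j) || g i0 l.
  have hf : feasible k p w i0 (x i0 - k) (y i0) gi.
    split => //.
    - by rewrite subr_ge0 ltW.
    - by rewrite /gi hg orbF; apply/eqP => e; apply: hji; rewrite e.
    - rewrite eta_add // -hb -natr1; lra.
  have := hopt _ _ _ hf; rewrite /payoff spill_add //.
  have [inc1 _] := inc i0.
  move=> H; move: (H); rewrite leNgt => /negP; apply; apply: inc1 => //.
    by apply: addr_ge0 => //; apply: spill_ge0.
  lra.
have hc := subset_leq_card sub.
rewrite cardsU1 in hc.
have hc' : (#|finset (fun i => (k < x i)%R)| <= (Defs.eta (g i0)).+1)%N.
  by apply: leq_trans hc _; rewrite /Defs.eta; case: (_ \notin _).
have : #|finset (fun i => k < x i)|%:R <= (Defs.eta (g i0)).+1%:R :> R by rewrite ler_nat.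
rewrite -natr1 => hle.
have py : 0 <= p i0 * y i0 by apply: mulr_ge0 => //; apply: ltW.
have := wo i0; rewrite -hb => hw.
apply: le_trans (ler_wpM2r (ltW k0) hle) _.
nra.
Qed.

Theorem proposition3 (R : realType)
    (N : nat -> nat)                                  (* number of players in game m *)
    (k : R)                                           (* link cost, fixed *)
    (p w : forall m : nat, 'I_(N m) -> R)             (* prices, wealths *)
    (U : forall m : nat, 'I_(N m) -> R -> R -> R)     (* utilities *)
    (omega : R)
    (x y : forall m : nat, 'I_(N m) -> R)             (* equilibrium provisions, private goods *)
    (g : forall m : nat, 'I_(N m) -> 'I_(N m) -> bool) (* equilibrium links *) :
  (forall B : nat, exists M : nat, forall m, (M <= m)%N -> (B <= N m)%N) ->
  0 < k ->
  (forall m i, 0 < p m i) ->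
  (forall m i, 0 < w m i) ->
  (forall m i, admissible_utility (U m i)) ->
  (forall m i, assumption1 (U m i) (p m i)) ->
  0 < omega ->
  (forall m i, w m i <= omega) ->
  (forall m, sociable_nash_eq k (p m) (w m) (U m) (x m) (y m) (g m)) ->
  (fun m => (#|core k (x m) (g m)|%:R / (N m)%:R : R)) @ \oo --> (0 : R).
Proof.
move=> hN k0 p0 w0 adm _ o0 wo sne.
have cb : forall m, #|core k (x m) (g m)|%:R * k <= omega.
  move=> m; apply: (@core_bound R (N m) k (p m) (w m) (U m) (x m) (y m) (g m) omega) => //.
  - exact: ltW.
  - by move=> i; have [_ _ ?] := adm m i.
  - by have [] := sne m.
apply/cvgrPdist_le => e e0.
set C := omega / k.
have [M HM] := hN (Num.truncn (C / e)).+1.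
exists M => // m /= hm.
have hB := HM m hm.
have Npos : (0 < N m)%N by apply: leq_trans hB.
have NR : 0 < (N m)%:R :> R by rewrite ltr0n.
have hB' : (Num.truncn (C / e)).+1%:R <= (N m)%:R :> R by rewrite ler_nat.
have ht := truncnS_gt (C / e).
have cC : #|core k (x m) (g m)|%:R <= C :> R by rewrite /C ler_pdivlMr.
rewrite sub0r normrN ger0_norm; last by apply: divr_ge0.
rewrite ler_pdivrMr //.
have : C < e * (N m)%:R.
  rewrite -ltr_pdivrMl //. rewrite mulrC. apply: lt_le_trans ht hB'.
move=> h; rewrite mulrC; lra.
Qed.
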